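(* Let $(a,b)$ be a real interval and let $W$ be a weight matrix of size $N$ on $(a,b)$ (in the sense of the context; finite moments are not required). Let $\{F_n\}_{n\ge0}$ be a sequence of matrix orthogonal functions of size $N$ on $(a,b)$ with respect to $W$. Assume that for all $x\in(a,b)$ and all $n\ge0$ $$xF_n(x)=A_nF_{n-1}(x)+B_nF_n(x)+C_nF_{n+1}(x),$$ where $A_n,B_n,C_n\in M_N(\mathbb C)$ are constant matrices, $A_0=0$ (so the term with $F_{-1}$ is absent) and every $C_n$ is nonsingular. Then: (i) for every $n\ge0$ there is a uniquely determined matrix polynomial $Q_n\in M_N(\mathbb C)[x]$ with $F_n(x)=Q_n(x)F_0(x)$ on $(a,b)$; moreover $\deg Q_n=n$ and the leading coefficient of $Q_n$ is nonsingular; (ii) $W'=F_0WF_0^*$ has all moments $\int_a^b x^kW'(x)\,dx$, $k\ge0$, finite; (iii) $\{Q_n\}_{n\ge0}$ is a sequence of matrix orthogonal polynomials with respect to $W'$, i.e. $\int_a^bQ_i(x)W'(x)Q_j(x)^*\,dx=0$ for $i\neq j$; (iv) $xQ_n=A_nQ_{n-1}+B_nQ_n+C_nQ_{n+1}$ for all $n\ge0$ (with $A_0=0$).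
   Context: For $M\in M_N(\mathbb C)$, $M^*$ denotes the conjugate transpose. A weight matrix of size $N$ on $(a,b)$ (here without requiring finite moments) is an integrable function $W$ on $(a,b)$ (supported in $[a,b]$) such that $W(x)$ is a self-adjoint positive semidefinite $N\times N$ matrix for every $x\in(a,b)$ and positive definite for almost every $x$. A sequence of matrix orthogonal functions with respect to $W$ is a sequence $\{F_n\}_{n\ge0}$ of $M_N(\mathbb C)$-valued functions on $(a,b)$ such that $\det F_0(x)\neq0$ for almost every $x\in(a,b)$, $F_i(x)W(x)F_j(x)^*$ is integrable on $[a,b]$ for all $i,j\ge0$, and $\int_a^bF_i(x)W(x)F_j(x)^*\,dx=0$ for all $i\neq j$. A sequence of matrix orthogonal polynomials with respect to a weight $W'$ is a sequence $\{Q_n\}$ of matrix polynomials with $\deg Q_n=n$, nonsingular leading coefficient, and $\int_a^b Q_iW'Q_j^*\,dx=0$ for $i\ne j$. *)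

(* Defs.v *)
From HB Require Import structures.
From mathcomp Require Import all_boot all_order all_algebra.
From mathcomp Require Import all_classical all_reals all_analysis.
From mathcomp Require Import complex.
Set Implicit Arguments. Unset Strict Implicit. Unset Printing Implicit Defensive.
Import Order.TTheory GRing.Theory Num.Theory.
Local Open Scope classical_set_scope.
Local Open Scope ring_scope.

Section Defs.
Variable R : realType.
Local Notation C := R[i].
Local Notation mu := (@lebesgue_measure R).

Definition oitv (a b : \bar R) : set R := [set x : R | (a < x%:E < b)%E].

Definition adj (m n : nat) (M : 'M[C]_(m, n)) : 'M[C]_(n, m) :=
  (map_mx (@conjc R) M)^T.

Definition cintegrable (D : set R) (f : R -> C) : Prop :=
  mu.-integrable D (EFin \o (fun x => complex.Re (f x))) /\
  mu.-integrable D (EFin \o (fun x => complex.Im (f x))).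

Definition cintegral (D : set R) (f : R -> C) : C :=
  Complex (Rintegral mu D (fun x => complex.Re (f x)))
          (Rintegral mu D (fun x => complex.Im (f x))).

Definition mx_integrable (m n : nat) (D : set R) (F : R -> 'M[C]_(m, n)) : Prop :=
  forall i j, cintegrable D (fun x => F x i j).

Definition mx_integral (m n : nat) (D : set R) (F : R -> 'M[C]_(m, n))
  : 'M[C]_(m, n) := \matrix_(i, j) cintegral D (fun x => F x i j).

Definition selfadj (n : nat) (M : 'M[C]_n) := adj M = M.

Definition psd (n : nat) (M : 'M[C]_n) : Prop :=
  selfadj M /\ forall v : 'cV[C]_n, 0 <= (adj v *m M *m v) 0 0.

Definition posdef (n : nat) (M : 'M[C]_n) : Prop :=
  selfadj M /\ forall v : 'cV[C]_n, v != 0 -> 0 < (adj v *m M *m v) 0 0.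

Definition weight_matrix (N : nat) (a b : \bar R) (W : R -> 'M[C]_N) : Prop :=
  [/\ mx_integrable (oitv a b) W,
      (forall x, oitv a b x -> psd (W x)) &
      {ae mu, forall x, oitv a b x -> posdef (W x)}].

Definition finite_moments (N : nat) (a b : \bar R) (W : R -> 'M[C]_N) : Prop :=
  forall k : nat, mx_integrable (oitv a b) (fun x => (x%:C)%C ^+ k *: W x).

Definition mx_orth_funs (N : nat) (a b : \bar R) (W : R -> 'M[C]_N)
  (F : nat -> R -> 'M[C]_N) : Prop :=
  [/\ {ae mu, forall x, oitv a b x -> \det (F 0%N x) != 0},
      (forall i j, mx_integrable (oitv a b) (fun x => F i x *m W x *m adj (F j x))) &
      (forall i j, i <> j ->
         mx_integral (oitv a b) (fun x => F i x *m W x *m adj (F j x)) = 0)].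

Definition mxpeval (N : nat) (P : {poly 'M[C]_N.+1}) (x : R) : 'M[C]_N.+1 :=
  P.[((x%:C)%C)%:M].

Definition mx_orth_polys (N : nat) (a b : \bar R) (W : R -> 'M[C]_N.+1)
  (Q : nat -> {poly 'M[C]_N.+1}) : Prop :=
  [/\ (forall n, size (Q n) = n.+1),
      (forall n, lead_coef (Q n) \in unitmx),
      (forall i j, mx_integrable (oitv a b)
          (fun x => mxpeval (Q i) x *m W x *m adj (mxpeval (Q j) x))) &
      (forall i j, i <> j -> mx_integral (oitv a b)
          (fun x => mxpeval (Q i) x *m W x *m adj (mxpeval (Q j) x)) = 0)].

End Defs.

(* Main.v *)
Require Import Defs.
From HB Require Import structures.
From mathcomp Require Import all_boot all_order all_algebra.
From mathcomp Require Import all_classical all_reals all_analysis.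
From mathcomp Require Import complex.
From mathcomp Require Import lra.
Import Order.TTheory GRing.Theory Num.Theory.
Local Open Scope classical_set_scope.
Local Open Scope ring_scope.

Section S2.
Variable R : realType.
Local Notation mu := (@lebesgue_measure R).
Variable D : set R.
Hypothesis mD : measurable (D : set (measurableTypeR R)).

Lemma ci_ext (f g : R -> R[i]) : {in D, f =1 g} -> cintegrable D f -> cintegrable D g.
Proof.
move=> fg [h1 h2]; split.
  by apply: (eq_integrable mD _ _ _ h1) => x xD /=; rewrite fg.
by apply: (eq_integrable mD _ _ _ h2) => x xD /=; rewrite fg.
Qed.
Arguments ci_ext {f g}.

Lemma ci_add (f g : R -> R[i]) : cintegrable D f -> cintegrable D g ->
  cintegrable D (fun x => f x + g x).
Proof.
move=> [f1 f2] [g1 g2]; split.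
  by apply: (eq_integrable mD _ _ _ (integrableD mD f1 g1)) => x _ /=; case: (f x); case: (g x).
by apply: (eq_integrable mD _ _ _ (integrableD mD f2 g2)) => x _ /=; case: (f x); case: (g x).
Qed.

Arguments ci_add {f g}.
Lemma ci0 : cintegrable D (fun=> 0).
Proof.
by split; apply: (eq_integrable mD _ _ _ (integrable0 _ _)) => x _.
Qed.

Lemma ci_scale (c : R[i]) (f : R -> R[i]) : cintegrable D f ->
  cintegrable D (fun x => c * f x).
Proof.
move=> [f1 f2]; case: c => p q; split.
  have := integrableB mD (integrableZl mD p f1) (integrableZl mD q f2).
  by move=> Hi; apply: (eq_integrable mD _ _ _ Hi) => x _ /=; case: (f x) => r s /=; rewrite -!EFinM -?EFinD -?EFinB.
have := integrableD mD (integrableZl mD p f2) (integrableZl mD q f1).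
by move=> Hi; apply: (eq_integrable mD _ _ _ Hi) => x _ /=; case: (f x) => r s /=; rewrite -!EFinM -?EFinD -?EFinB.
Qed.

Lemma ci_sum (I : Type) (s : seq I) (h : I -> R -> R[i]) :
  (forall i, cintegrable D (h i)) -> cintegrable D (fun x => \sum_(i <- s) h i x).
Proof.
move=> hi; elim: s => [|i s IH].
  by move: ci0; apply: ci_ext => x _; rewrite big_nil.
move: (ci_add (hi i) IH); apply: ci_ext => x _; by rewrite big_cons.
Qed.

Variable n : nat.
Implicit Types G H : R -> 'M[R[i]]_n.

Lemma mi_ext G H : {in D, G =1 H} -> mx_integrable D G -> mx_integrable D H.
Proof. by move=> GH hG i j; apply: (ci_ext _ (hG i j)) => x xD; rewrite GH. Qed.
Arguments mi_ext {G H}.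

Lemma mi_add G H : mx_integrable D G -> mx_integrable D H ->
  mx_integrable D (fun x => G x + H x).
Proof.
move=> hG hH i j; apply: (ci_ext _ (ci_add (hG i j) (hH i j))) => x _; by rewrite mxE.
Qed.

Lemma mi_lmul (M : 'M[R[i]]_n) G : mx_integrable D G ->
  mx_integrable D (fun x => M *m G x).
Proof.
move=> hG i j.
have := @ci_sum _ (index_enum 'I_n) (fun k x => M i k * G x k j) (fun k => ci_scale (M i k) _ (hG k j)).
by apply: ci_ext => x _; rewrite mxE.
Qed.

Lemma mi_rmul (M : 'M[R[i]]_n) G : mx_integrable D G ->
  mx_integrable D (fun x => G x *m M).
Proof.
move=> hG i j.
have := @ci_sum _ (index_enum 'I_n) (fun k x => M k j * G x i k) (fun k => ci_scale (M k j) _ (hG i k)).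
by apply: ci_ext => x _; rewrite mxE; apply: eq_bigr => k _; rewrite mulrC.
Qed.

Lemma mint_ext G H : {in D, G =1 H} -> mx_integral D G = mx_integral D H.
Proof.
move=> GH; apply/matrixP => i j; rewrite !mxE /cintegral.
by congr Complex; apply: eq_Rintegral => x xD; rewrite GH.
Qed.
End S2.
Arguments mi_ext {R D} mD {n G H}.
Arguments mi_add {R D} mD {n G H}.
Arguments mi_lmul {R D} mD {n} M {G}.
Arguments mi_rmul {R D} mD {n} M {G}.
Arguments mint_ext {R D n G H}.


Lemma aux (V : zmodType) (x a b : V) : a + b + (x - a - b) = x.
Proof. by rewrite -[x - a - b]addrA -opprD addrCA subrr addr0. Qed.

Section P.
Variable T : unitRingType.
Variables (A B C : nat -> T).
Hypothesis hC : forall n, C n \is a GRing.unit.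

Definition nextp n (p q : {poly T}) :=
  (C n)^-1%:P * ('X * q - (A n)%:P * p - (B n)%:P * q).

Fixpoint QQ n : {poly T} * {poly T} :=
  match n with
  | 0 => (1, nextp 0 1 1)
  | m.+1 => ((QQ m).2, nextp m.+1 (QQ m).1 (QQ m).2)
  end.

Definition Qs n := (QQ n).1.

Lemma QsS n : Qs n.+1 = nextp n (Qs n.-1) (Qs n).
Proof. by case: n. Qed.

Lemma Qs_rec n : 'X * Qs n = (A n)%:P * Qs n.-1 + (B n)%:P * Qs n + (C n)%:P * Qs n.+1.
Proof.
rewrite QsS /nextp mulrA -polyCM mulrV // mul1r.
by rewrite aux.
Qed.

Lemma Qs_size n : size (Qs n) = n.+1 /\ lead_coef (Qs n) \is a GRing.unit.
Proof.
elim/ltn_ind: n => -[_|m IH].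
  by rewrite /Qs /= size_poly1 lead_coef1 unitr1.
have sp : (size (Qs m.-1) <= m.+1)%N.
  case: m IH => [|k] IH; first by rewrite /Qs /= size_poly1.
  by rewrite /= (IH k _).1 // ltnW.
have [sq lq] := IH m (ltnSn _).
have q0 : Qs m != 0 by rewrite -size_poly_eq0 sq.
have sX : size ('X * Qs m) = m.+2 by rewrite -commr_polyX size_mulX // sq.
have lX : lead_coef ('X * Qs m) = lead_coef (Qs m) by rewrite -commr_polyX lead_coefMX.
have s1 : (size ((A m)%:P * Qs m.-1)%R < size ('X * Qs m)%R)%N.
  by rewrite sX mul_polyC ltnS (leq_trans (size_scale_leq _ _)).
have s2 : (size ((B m)%:P * Qs m)%R < size ('X * Qs m - (A m)%:P * Qs m.-1)%R)%N.
  by rewrite size_polyDl ?size_opp // sX mul_polyC ltnS (leq_trans (size_scale_leq _ _)) ?sq.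
have lr : GRing.lreg (C m)^-1 by apply/mulrI; rewrite unitrV.
rewrite QsS /nextp mul_polyC lreg_size // lead_coef_lreg //.
rewrite size_polyDl ?size_opp // size_polyDl ?size_opp // sX.
rewrite lead_coefDl ?size_opp // lead_coefDl ?size_opp // lX.
by split => //; rewrite unitrMl // unitrV hC.
Qed.
End P.
Arguments Qs {T}.
Arguments QsS {T}.
Arguments Qs_size {T A B C}.
Arguments Qs_rec {T A B C}.


Section M5.
Variable R : realType.

Lemma adjM m n p (M : 'M[R[i]]_(m, n)) (P : 'M[R[i]]_(n, p)) :
  adj (M *m P) = adj P *m adj M.
Proof. by rewrite /adj map_mxM trmx_mul. Qed.

Lemma adjK m n (M : 'M[R[i]]_(m, n)) : adj (adj M) = M.
Proof.
rewrite /adj map_trmx trmxK -map_mx_comp; apply/matrixP => i j.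
by rewrite mxE /= conjcK.
Qed.

Lemma adj_unit n (M : 'M[R[i]]_n) : M \in unitmx -> adj M \in unitmx.
Proof.
by rewrite !unitmxE /adj det_tr det_map_mx !unitfE conjc_eq0.
Qed.

Variable N : nat.
Local Notation MT := ('M[R[i]]_N.+1).

Lemma mx_unit (M : MT) : (M \in unitmx) = (M \is a GRing.unit).
Proof. by []. Qed.

Lemma mxpeval1 x : mxpeval (1 : {poly MT}) x = 1.
Proof. by rewrite /mxpeval -polyC1 hornerC. Qed.

Lemma mxpeval_lin (c a b : MT) (p q : {poly MT}) x :
  mxpeval (c%:P * ('X * q - a%:P * p - b%:P * q)) x =
  c *m ((x%:C)%C *: mxpeval q x - a *m mxpeval p x - b *m mxpeval q x).
Proof.
rewrite /mxpeval hornerCM !hornerD !hornerN !hornerCM -commr_polyX hornerMX.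
by rewrite -mulmxE mul_mx_scalar.
Qed.
End M5.

Section M6.
Variable R : realType.
Local Notation mu := (@lebesgue_measure R).

Lemma oitv_meas (a b : \bar R) : measurable (oitv a b : set (measurableTypeR R)).
Proof.
have := measurable_realfun.EFin_measurable (@measurableT _ R) (measurable_realfun.emeasurable_itv (Interval (BRight a) (BLeft b))).
rewrite setTI; congr measurable; apply/seteqP; split => x /=; rewrite in_itv /=; by [].
Qed.

Lemma fin_null (s : seq R) : measurable ([set` s] : set (measurableTypeR R)) /\ mu [set` s] = 0%E.
Proof.
elim: s => [|y s [ms m0]].
  have -> : [set` [::]] = (set0 : set R) by apply/seteqP; split => x //=.
  by split; [exact: measurable0 | exact: measure0].
have -> : [set` y :: s] = [set y] `|` ([set` s] : set R).
  apply/seteqP; split => x /=; rewrite inE.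
    by case/orP => [/eqP->|xs]; [left|right].
  by case => [->|xs]; rewrite ?eqxx ?xs ?orbT.
split; first by apply: measurableU => //; exact: measurable_set1.
apply/eqP; rewrite eq_le measure_ge0 andbT.
rewrite (le_trans (measureU2 mu (measurable_set1 y) ms)) //.
change (mu [set y] + mu [set` s] <= 0)%E; by rewrite m0 lebesgue_measure_set1 adde0.
Qed.

Lemma itv_in (a b : \bar R) : (a < b)%E ->
  exists c d : R, [/\ (a < c%:E)%E, c < d & (d%:E < b)%E].
Proof.
case: a => [r| |]; case: b => [s| |] //= ab.
- exists ((2 * r + s) / 3), ((r + 2 * s) / 3); rewrite !lte_fin in ab *; split; lra.
- by exists (r + 1), (r + 2); rewrite !lte_fin; split; [lra|lra|exact: ltry].
- by exists (s - 2), (s - 1); rewrite !lte_fin; split; [exact: ltNyr|lra|lra].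
- by exists 0, 1; split; [exact: ltNyr|lra|exact: ltry].
Qed.

Lemma ae_infinite (a b : \bar R) (P : R -> Prop) : (a < b)%E ->
  {ae mu, forall x, oitv a b x -> P x} ->
  forall s : seq R, exists x, (oitv a b x /\ P x) /\ x \notin s.
Proof.
move=> ab [N0 [mN0 N00 sub]] s; apply: contrapT => H.
have sub2 : oitv a b `<=` N0 `|` [set` s].
  move=> x ox; have [xs|xs] := boolP (x \in s); first by right.
  left; apply: sub => /= hP; apply: H; exists x; split => //; split => //; exact: hP.
have [c [d [ac cd db]]] := itv_in _ _ ab.
have [ms m0] := fin_null s.
have : (mu ([set` Interval (BRight c) (BLeft d)] : set R) <= mu (N0 `|` [set` s]))%E.
  apply: (le_measure mu); rewrite ?inE.
  - exact: measurable_itv.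
  - exact: measurableU.
  move=> x /=; rewrite in_itv /= => /andP[cx xd]; apply: sub2; rewrite /oitv /=.
  by rewrite (lt_trans ac) ?lte_fin // (lt_trans _ db) ?lte_fin.
rewrite lebesgue_measure_itv /= lte_fin cd => h.
have := le_trans h (measureU2 mu mN0 ms).
change (((d%:E - c%:E)%E <= mu N0 + mu [set` s])%E -> False).
rewrite N00 m0 adde0 -EFinB lee_fin.
by rewrite subr_le0 leNgt cd.
Qed.
End M6.

Section M7.
Variable R : realType.
Variable N : nat.
Local Notation MT := ('M[R[i]]_N.+1).

Lemma mxpeval_entry (P : {poly MT}) x i j :
  (mxpeval P x) i j = (\poly_(k < size P) (P`_k i j)).[(x%:C)%C].
Proof.
rewrite /mxpeval horner_coef (horner_coef_wide _ (size_poly _ _)).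
rewrite summxE; apply: eq_bigr => k _; rewrite coef_poly ltn_ord.
by rewrite -rmorphXn -mulmxE mul_mx_scalar mxE mulrC.
Qed.

Lemma poly_eq_on (G : R -> Prop) (P Q : {poly MT}) :
  (forall s : seq R, exists x, G x /\ x \notin s) ->
  (forall x, G x -> mxpeval P x = mxpeval Q x) -> P = Q.
Proof.
move=> Ginf PQ; apply/eqP; rewrite -subr_eq0; apply/eqP.
set D := P - Q.
have D0 x : G x -> mxpeval D x = 0.
  by move=> Gx; rewrite /mxpeval /D hornerD hornerN -!/(mxpeval _ x) PQ // subrr.
have [s [ss us Gs]] : exists s : seq R,
    [/\ size s = size D, uniq s & forall x, x \in s -> G x].
  elim: (size D) => [|k [s [ss us Gs]]]; first by exists [::].
  have [x [Gx xs]] := Ginf s; exists (x :: s); split => /=; first by rewrite ss.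
    by rewrite xs us.
  by move=> y; rewrite inE => /orP[/eqP->|/Gs].
apply/polyP => k; rewrite coef0; apply/matrixP => i j; rewrite mxE.
have : \poly_(k < size D) (D`_k i j) = 0.
  apply: (@roots_geq_poly_eq0 _ _ [seq (x%:C)%C | x <- s]).
  - apply/allP => _ /mapP[x xs ->]; rewrite /root -mxpeval_entry D0 ?mxE //.
    exact: Gs.
  - rewrite map_inj_uniq // => u v [].
    by move=> ->.
  - by rewrite size_map ss size_poly.
move/(congr1 (fun p : {poly R[i]} => p`_k)); rewrite coef_poly coef0.
by case: ltnP => // kD _; rewrite nth_default // mxE.
Qed.
End M7.


Section Span.
Variables (R : realType) (n : nat) (D : set R) (F : nat -> R -> 'M[R[i]]_n).

Inductive spanF : (R -> 'M[R[i]]_n) -> Prop :=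
| spF j : spanF (F j)
| spAdd G H : spanF G -> spanF H -> spanF (fun x => G x + H x)
| spMul M G : spanF G -> spanF (fun x => M *m G x)
| spExt G H : {in D, G =1 H} -> spanF G -> spanF H.
Arguments spAdd {G H}. Arguments spMul M {G}. Arguments spExt {G H}.

Lemma spanX (A B C : nat -> 'M[R[i]]_n) :
  (forall x, D x -> forall j,
     (x%:C)%C *: F j x = A j *m F j.-1 x + B j *m F j x + C j *m F j.+1 x) ->
  forall G, spanF G -> spanF (fun x => (x%:C)%C *: G x).
Proof.
move=> hrec G; elim => [j|G1 H1 _ IG _ IH|M G1 _ IG|G1 H1 GH _ IG].
- apply: (@spExt (fun x => A j *m F j.-1 x + B j *m F j x + C j *m F j.+1 x)).
    by move=> x; rewrite inE => Dx; rewrite hrec.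
  by apply: spAdd; [apply: spAdd|]; apply: spMul; apply: spF.
- by apply: (spExt _ (spAdd IG IH)) => x _ /=; rewrite scalerDr.
- by apply: (spExt _ (spMul M IG)) => x _ /=; rewrite scalemxAr.
- by apply: (spExt _ IG) => x xD /=; rewrite GH.
Qed.

Hypothesis mD : measurable (D : set (measurableTypeR R)).

Lemma span_int (W : R -> 'M[R[i]]_n) (K : R -> 'M[R[i]]_n) :
  (forall j, mx_integrable D (fun x => F j x *m W x *m K x)) ->
  forall G, spanF G -> mx_integrable D (fun x => G x *m W x *m K x).
Proof.
move=> hF G; elim => [j|G1 H1 _ IG _ IH|M G1 _ IG|G1 H1 GH _ IG].
- exact: hF.
- by apply: (mi_ext mD _ (mi_add mD IG IH)) => x _ /=; rewrite !mulmxDl.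
- by apply: (mi_ext mD _ (mi_lmul mD M IG)) => x _ /=; rewrite !mulmxA.
- by apply: (mi_ext mD _ IG) => x xD /=; rewrite GH.
Qed.
End Span.
Arguments spanF {R n}.
Arguments spF {R n D F}.
Arguments spExt {R n D F G H}.
Arguments spanX {R n D F A B C}.
Arguments span_int {R n D F} mD {W K}.


Lemma aux2 (V : zmodType) (a b c : V) : a + b + c - a - b = c.
Proof. by rewrite -[_ - a - b]addrA -opprD [a + b + c]addrC addrK. Qed.

Theorem theorem2p1 (R : realType) (N : nat) (a b : \bar R)
  (W : R -> 'M[R[i]]_N.+1) (F : nat -> R -> 'M[R[i]]_N.+1)
  (A B C : nat -> 'M[R[i]]_N.+1) :
  (a < b)%E ->
  weight_matrix a b W ->
  mx_orth_funs a b W F ->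
  A 0%N = 0 ->
  (forall n, C n \in unitmx) ->
  (forall x, oitv a b x -> forall n,
     (x%:C)%C *: F n x = A n *m F n.-1 x + B n *m F n x + C n *m F n.+1 x) ->
  let W' := fun x => F 0%N x *m W x *m adj (F 0%N x) in
  exists Q : nat -> {poly 'M[R[i]]_N.+1},
    [/\ (* (i) *)
        (forall n, (forall x, oitv a b x -> F n x = mxpeval (Q n) x *m F 0%N x)
           /\ (forall P : {poly 'M[R[i]]_N.+1},
                 (forall x, oitv a b x -> F n x = mxpeval P x *m F 0%N x) ->
                 P = Q n)),
        (forall n, size (Q n) = n.+1 /\ lead_coef (Q n) \in unitmx),
        (* (ii) *)
        finite_moments a b W',
        (* (iii) *)
        weight_matrix a b W' /\ mx_orth_polys a b W' Q &
        (* (iv) *)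
        (forall n, 'X * Q n = (A n)%:P * Q n.-1 + (B n)%:P * Q n + (C n)%:P * Q n.+1)].
Proof.
move=> ab [Wint Wpsd Wpd] [Fdet Fint Forth] A0 hC hrec W'.
have mD := oitv_meas R a b.
have hCu : forall n, C n \is a GRing.unit := hC.
pose Q := Qs A B C.
have step : forall n, (forall x, oitv a b x -> F n.-1 x = mxpeval (Q n.-1) x *m F 0%N x) ->
    (forall x, oitv a b x -> F n x = mxpeval (Q n) x *m F 0%N x) ->
    (forall x, oitv a b x -> F n.+1 x = mxpeval (Q n.+1) x *m F 0%N x).
  move=> n h1 h2 x Dx; rewrite /Q QsS /nextp mxpeval_lin -mulmxA !mulmxBl.
  rewrite -scalemxAl -!mulmxA -h1 // -h2 // hrec // aux2.
  by rewrite (mulKmx (hC n)).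
have Qe : forall n x, oitv a b x -> F n x = mxpeval (Q n) x *m F 0%N x.
  suff h : forall n, (forall x, oitv a b x -> F n x = mxpeval (Q n) x *m F 0%N x) /\
      (forall x, oitv a b x -> F n.+1 x = mxpeval (Q n.+1) x *m F 0%N x).
    by move=> n; exact: (h n).1.
  have h0 : forall x, oitv a b x -> F 0%N x = mxpeval (Q 0%N) x *m F 0%N x.
    by move=> x _; rewrite /Q /Qs /= mxpeval1 mul1mx.
  elim => [|n [h1 h2]]; first by split => //; exact: (step 0%N h0 h0).
  by split => //; exact: (step n.+1 h1 h2).
have adjW : forall x, oitv a b x -> selfadj (W' x).
  move=> x Dx; have [sW _] := Wpsd x Dx.
  by rewrite /selfadj /W' !adjM adjK sW mulmxA.
exists Q; split.
- move=> n; split; first exact: Qe.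
  move=> P hP.
  apply: (@poly_eq_on R N (fun x => oitv a b x /\ \det (F 0%N x) != 0)).
    move=> s; have [x [[Dx dx] xs]] := ae_infinite _ _ _ _ ab Fdet s.
    by exists x.
  move=> x [Dx dx]; have u : F 0%N x \in unitmx by rewrite unitmxE unitfE.
  by apply: (can_inj (mulmxK u)); rewrite /= -hP // -Qe.
- by move=> n; exact: Qs_size.
- have sp : forall k, spanF (oitv a b) F (fun x => (x%:C)%C ^+ k *: F 0%N x).
    elim => [|k IH].
      by apply: (spExt _ (spF 0%N)) => x _ /=; rewrite expr0 scale1r.
    have := spanX hrec _ IH. apply: spExt => x _ /=; by rewrite scalerA -exprS.
  move=> k; apply: (mi_ext mD _ (span_int mD (fun j => Fint j 0%N) _ (sp k))).
  by move=> x _ /=; rewrite /W' -!scalemxAl.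
- split; first split.
  + exact: Fint 0%N 0%N.
  + move=> x Dx; have [sW pW] := Wpsd x Dx; split; first exact: adjW.
    move=> v; have := pW (adj (F 0%N x) *m v).
    by rewrite /W' adjM adjK !mulmxA.
  + apply: (filterS2 (ae_filter_ringOfSetsType _) _ Wpd Fdet) => x h1 h2 Dx.
    have [sW pW] := h1 Dx; split; first exact: adjW.
    have u : F 0%N x \in unitmx by rewrite unitmxE unitfE h2.
    move=> v v0; have := pW (adj (F 0%N x) *m v).
    rewrite /W' adjM adjK !mulmxA; apply.
    apply: contra v0 => /eqP e; apply/eqP.
    by rewrite -(mulKmx (adj_unit _ _ _ u) v) e mulmx0.
  have ext : forall i j, {in oitv a b, (fun x => F i x *m W x *m adj (F j x)) =1
      (fun x => mxpeval (Q i) x *m W' x *m adj (mxpeval (Q j) x))}.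
    move=> i j x; rewrite inE => Dx /=.
    by rewrite (Qe i x Dx) (Qe j x Dx) /W' !adjM !mulmxA.
  split.
  + by move=> n; exact: (Qs_size hCu n).1.
  + by move=> n; exact: (Qs_size hCu n).2.
  + by move=> i j; exact: (mi_ext mD (ext i j) (Fint i j)).
  + by move=> i j ij; rewrite -(mint_ext (ext i j)) Forth.
- by move=> n; exact: Qs_rec.
Qed.
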